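(* Let $A,B,C$ be an LR triple on $V$ and let $\mathcal I$ be the set of idempotent centralizers for $A,B,C$ (a subalgebra of $\mathrm{End}(V)$). (i) If $A,B,C$ is trivial (i.e. $d=0$), then $I$ is a basis of $\mathcal I$. (ii) If $A,B,C$ is nonbipartite, then $I$ is a basis of $\mathcal I$. (iii) If $A,B,C$ is bipartite and nontrivial (so $d$ is even), then $I,J$ is a basis of $\mathcal I$, where $J=\sum_{j=0}^{d/2}E_{2j}$.
   Context: Let $V$ be a vector space over a field $\mathbb F$ with $\dim V=d+1$. A decomposition of $V$ is a sequence $(V_i)_{i=0}^d$ of one-dimensional subspaces with $V=\bigoplus V_i$; $X$ lowers it if $XV_i=V_{i-1}$ ($1\le i\le d$), $XV_0=0$; raises it if $XV_i=V_{i+1}$ ($0\le i\le d-1$), $XV_d=0$. An ordered pair $X,Y$ is an LR pair if some decomposition (unique, the $(X,Y)$-decomposition) is lowered by $X$ and raised by $Y$. An LR triple is $A,B,C\in\mathrm{End}(V)$ with $A,B$; $B,C$; $C,A$ LR pairs; it is trivial if $d=0$. Let $E_i,E'_i,E''_i$ ($0\le i\le d$) be the projections onto the $i$-th components of the $(A,B)$-, $(B,C)$-, $(C,A)$-decompositions. The triple is bipartite if $\mathrm{tr}(CE_i)=\mathrm{tr}(AE'_i)=\mathrm{tr}(BE''_i)=0$ for all $i$, nonbipartite otherwise. An idempotent centralizer for $A,B,C$ is an element of $\mathrm{End}(V)$ commuting with every $E_i,E'_i,E''_i$ ($0\le i\le d$). *)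

(* Defs.v *)
(* V = F^(d+1) as row vectors 'rV[F]_(d.+1); End(V) = 'M[F]_(d.+1)
   acting on the right (v |-> v *m X). Subspaces are represented by square
   matrices via their row spaces (mxalgebra). *)
From HB Require Import structures.
From mathcomp Require Import all_boot all_order all_algebra.
Set Implicit Arguments. Unset Strict Implicit. Unset Printing Implicit Defensive.
Import Order.TTheory GRing.Theory Num.Theory.
Local Open Scope ring_scope.

Section LR.
Variables (F : fieldType) (d : nat).
Local Notation M := 'M[F]_(d.+1).

Definition decomposition (Vs : nat -> M) : Prop :=
  (forall i, (i <= d)%N -> \rank (Vs i) = 1%N) /\
  (\sum_(i < d.+1) Vs i == 1%:M)%MS /\
  mxdirect (\sum_(i < d.+1) Vs i).

Definition lowers (X : M) (Vs : nat -> M) : Prop :=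
  (forall i, (0 < i <= d)%N -> (Vs i *m X == Vs i.-1)%MS) /\ Vs 0%N *m X = 0.

Definition raises (X : M) (Vs : nat -> M) : Prop :=
  (forall i, (i < d)%N -> (Vs i *m X == Vs i.+1)%MS) /\ Vs d *m X = 0.

Definition XY_decomposition (X Y : M) (Vs : nat -> M) : Prop :=
  decomposition Vs /\ lowers X Vs /\ raises Y Vs.

Definition LR_pair (X Y : M) : Prop := exists Vs, XY_decomposition X Y Vs.

Definition LR_triple (A B C : M) : Prop :=
  LR_pair A B /\ LR_pair B C /\ LR_pair C A.

Definition comp_proj (Vs : nat -> M) (i : nat) : M :=
  proj_mx (Vs i) (\sum_(j < d.+1 | (j : nat) != i) Vs j)%MS.

End LR.

(* Main.v *)
Require Import Defs.
From HB Require Import structures.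
From mathcomp Require Import all_boot all_order all_algebra.
From Stdlib Require Import Setoid.
From mathcomp Require Import zify.
Set Implicit Arguments. Unset Strict Implicit. Unset Printing Implicit Defensive.
Import Order.TTheory GRing.Theory Num.Theory.
Local Open Scope ring_scope.

Section Frame.
Variables (F : fieldType) (d : nat).
Local Notation n := d.+1.
Local Notation M := 'M[F]_n.

Definition frame (Vs : nat -> M) : M := \matrix_(i < n) nz_row (Vs i).

Lemma frame_row Vs (i : 'I_n) : row i (frame Vs) = nz_row (Vs i).
Proof. by rewrite rowK. Qed.

Lemma frame_eq Vs (i : 'I_n) : decomposition Vs -> (row i (frame Vs) == Vs i)%MS.
Proof.
case=> rk _; rewrite frame_row.
have nz : nz_row (Vs i) != 0.
  by rewrite nz_row_eq0 -mxrank_eq0 rk ?leq_ord // -ltnS.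
apply/andP; split; first exact: nz_row_sub.
have := mxrank_leqif_sup (nz_row_sub (Vs i)).
by rewrite rank_rV nz rk ?(leq_ord i) //; case=> _ <-.
Qed.

Lemma frame_unit Vs : decomposition Vs -> frame Vs \in unitmx.
Proof.
move=> dec; have [_ [/andP[_ full] _]] := dec.
rewrite -row_full_unit -sub1mx (submx_trans full) //.
apply/sumsmx_subP => i _.
by have /andP[_ h] := frame_eq i dec; rewrite (submx_trans h) ?row_sub.
Qed.


Definition cf (P X : M) : M := P *m X *m invmx P.

Lemma cfM P X Y : P \in unitmx -> cf P (X *m Y) = cf P X *m cf P Y.
Proof. by move=> u; rewrite /cf !mulmxA mulmxKV. Qed.

Lemma cf_inj P X Y : P \in unitmx -> cf P X = cf P Y -> X = Y.
Proof.
move=> u e.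
have h Z : invmx P *m (P *m Z *m invmx P) *m P = Z by rewrite !mulmxA mulVmx // mul1mx mulmxKV.
by rewrite -(h X) -(h Y); move: e; rewrite /cf => ->.
Qed.

Lemma cf_scalar P c : P \in unitmx -> cf P c%:M = c%:M.
Proof. by move=> u; rewrite /cf scalar_mxC -mulmxA mulmxV // mulmx1. Qed.

Lemma cfD P X Y : cf P (X + Y) = cf P X + cf P Y.
Proof. by rewrite /cf mulmxDr mulmxDl. Qed.

Lemma cfZ P c X : cf P (c *: X) = c *: cf P X.
Proof. by rewrite /cf -scalemxAr -scalemxAl. Qed.

Lemma cf_tr P X : P \in unitmx -> \tr (cf P X) = \tr X.
Proof. by move=> u; rewrite /cf mxtrace_mulC mulmxA mulVmx // mul1mx. Qed.

Lemma row_cf P X (i : 'I_n) : row i (cf P X) = row i P *m X *m invmx P.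
Proof. by rewrite /cf !row_mul. Qed.

Lemma rowP_inv (P : M) (i : 'I_n) : P \in unitmx -> row i P *m invmx P = delta_mx 0 i.
Proof. by move=> u; rewrite -row_mul mulmxV // rowE mulmx1. Qed.

Lemma row_mul_cf (P X : M) (i : 'I_n) : P \in unitmx ->
  row i P *m X = row i (cf P X) *m P.
Proof. by move=> u; rewrite row_cf mulmxKV. Qed.

Lemma proj_frame Vs (k : 'I_n) (i : nat) : decomposition Vs -> (i <= d)%N ->
  row k (frame Vs) *m comp_proj Vs i = (k == i :> nat)%:R *: row k (frame Vs).
Proof.
move=> dec le_id; have [rk [_ dx]] := dec.
set i' : 'I_n := Ordinal (le_id : (i < n)%N).
move/mxdirect_sumsP: dx => dx; have dxi := dx i' isT.
have eqS : (\sum_(j < n | (j : nat) != i) Vs j)%MS = (\sum_(j < n | true && (j != i')) Vs j)%MS.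
  by apply: eq_bigl => j.
rewrite /comp_proj eqS.
have /andP[rk1 _] := frame_eq k dec.
case: eqP => [ki | kni].
  by rewrite scale1r proj_mx_id // -ki.
rewrite scale0r proj_mx_0 //; apply: (sumsmx_sup k); last exact: rk1.
by apply/eqP => e; apply: kni; rewrite e.
Qed.


Lemma shift_row Vs X (i k : 'I_n) : decomposition Vs -> (Vs i *m X == Vs k)%MS ->
  exists2 a, a != 0 & row i (frame Vs) *m X = a *: row k (frame Vs).
Proof.
move=> dec /andP[s1 s2].
have /eqmxP ei := frame_eq i dec; have /andP[ek1 ek2] := frame_eq k dec.
have e2 := eqmxMr X ei.
have : (row i (frame Vs) *m X <= row k (frame Vs))%MS.
  by rewrite e2 (submx_trans s1 ek2).
case/sub_rVP => a ea; exists a => //.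
apply/eqP => a0; move: ea; rewrite a0 scale0r => z.
have : (Vs k <= row i (frame Vs) *m X)%MS by rewrite e2.
rewrite z => /submx0null /eqP; rewrite -mxrank_eq0.
by have [rk _] := dec; rewrite rk ?(leq_ord k) // -ltnS.
Qed.

Lemma zero_row Vs (X : M) (i : 'I_n) : decomposition Vs -> Vs i *m X = 0 ->
  row i (frame Vs) *m X = 0.
Proof.
move=> dec z; have /andP[e1 _] := frame_eq i dec.
by apply/eqP; rewrite -submx0 -z submxMr.
Qed.

Definition lsh (S : M) := forall i j : 'I_n, (S i j != 0) = (j.+1 == i :> nat).
Definition rsh (S : M) := forall i j : 'I_n, (S i j != 0) = (i.+1 == j :> nat).

Lemma entry_row (S : M) i j : S i j = row i S 0 j.
Proof. by rewrite mxE. Qed.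

Lemma row_delta_entry (a : F) (k j : 'I_n) :
  (a *: delta_mx 0 k : 'rV_n) 0 j = a * (k == j)%:R.
Proof. by rewrite !mxE eqxx eq_sym. Qed.

Lemma bnat_neq0 (b : bool) : ((b%:R : F) != 0) = b.
Proof. by case: b; rewrite ?oner_neq0 ?eqxx. Qed.

Lemma lowers_lsh Vs X : decomposition Vs -> lowers X Vs -> lsh (cf (frame Vs) X).
Proof.
move=> dec [low0 lowz] i j; have u := frame_unit dec.
rewrite entry_row row_cf.
case: i => [[|i'] Hi].
  by rewrite (zero_row (i := Ordinal Hi) dec lowz) mul0mx mxE eqxx.
have Hi' : (i' < n)%N by apply: ltnW.
have := low0 i'.+1 Hi.
case/(shift_row (i := Ordinal Hi) (k := Ordinal Hi') dec) => a a0 ->.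
rewrite -scalemxAl rowP_inv // row_delta_entry mulf_eq0 negb_or a0 /=.
by rewrite bnat_neq0 eqSS; apply/eqP/eqP => [<-|e] //; apply: val_inj.
Qed.

Lemma raises_rsh Vs X : decomposition Vs -> raises X Vs -> rsh (cf (frame Vs) X).
Proof.
move=> dec [r0 rz] i j; have u := frame_unit dec.
rewrite entry_row row_cf.
case: i => i Hi.
case: (ltnP i d) => hid.
  have Hi' : (i.+1 < n)%N by [].
  have := r0 i hid.
  case/(shift_row (i := Ordinal Hi) (k := Ordinal Hi') dec) => a a0 ->.
  rewrite -scalemxAl rowP_inv // row_delta_entry mulf_eq0 negb_or a0 /= bnat_neq0.
  by apply/eqP/eqP => [<-|e] //; apply: val_inj.
have eid : i = d by apply/eqP; rewrite eqn_leq hid -ltnS Hi.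
have rz' : Vs i *m X = 0 by rewrite eid.
rewrite (zero_row (i := Ordinal Hi) dec rz') mul0mx mxE eqxx /=.
by apply/esym/eqP => e; have := ltn_ord j; rewrite -e eid ltnn.
Qed.


Definition low k (z : 'rV[F]_n) := forall m : 'I_n, (k <= m)%N -> z 0 m = 0.
Definition high k (z : 'rV[F]_n) := forall m : 'I_n, (m + k <= d)%N -> z 0 m = 0.

Lemma lsh_mulE (S : M) (z : 'rV_n) (j : 'I_n) : lsh S ->
  (z *m S) 0 j = if (j < d)%N then z 0 (inord j.+1) * S (inord j.+1) j else 0.
Proof.
move=> hS; rewrite mxE; case: ltnP => hj.
  rewrite (bigD1 (inord j.+1)) //= big1 ?addr0 // => m ne.
  have -> : S m j = 0.
    apply/eqP; rewrite -[_ == 0]negbK hS; apply/eqP => e; apply: (negP ne).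
    by apply/eqP/val_inj; rewrite /= inordK // -e.
  by rewrite mulr0.
rewrite big1 // => m _.
have -> : S m j = 0.
  apply/eqP; rewrite -[_ == 0]negbK hS; apply/eqP => e.
  by have := ltn_ord m; rewrite -e ltnS leqNgt ltnS hj.
by rewrite mulr0.
Qed.

Lemma rsh_mulE (S : M) (z : 'rV_n) (j : 'I_n) : rsh S ->
  (z *m S) 0 j = if (0 < j)%N then z 0 (inord j.-1) * S (inord j.-1) j else 0.
Proof.
move=> hS; rewrite mxE; case: ltnP => hj.
  rewrite (bigD1 (inord j.-1)) //= big1 ?addr0 // => m ne.
  have -> : S m j = 0.
    apply/eqP; rewrite -[_ == 0]negbK hS; apply/eqP => e; apply: (negP ne).
    by apply/eqP/val_inj; rewrite /= -e /= inordK ?ltn_ord.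
  by rewrite mulr0.
rewrite big1 // => m _.
have -> : S m j = 0.
  apply/eqP; rewrite -[_ == 0]negbK hS; apply/eqP => e.
  by move: hj; rewrite -e.
by rewrite mulr0.
Qed.

Lemma lsh_nz (S : M) (j : 'I_n) : lsh S -> (j < d)%N -> S (inord j.+1) j != 0.
Proof. by move=> hS hj; rewrite hS inordK. Qed.

Lemma rsh_nz (S : M) (j : 'I_n) : rsh S -> (0 < j)%N -> S (inord j.-1) j != 0.
Proof.
move=> hS hj; rewrite hS inordK ?prednK //.
exact: ltnW.
Qed.

Lemma L1 (S : M) z k : lsh S -> low k (z *m S) <-> low k.+1 z.
Proof.
move=> hS; split => h m hm.
  have m0 : (0 < m)%N by apply: leq_trans hm.
  have jd : (m.-1 < n)%N by apply: leq_ltn_trans (leq_pred _) (ltn_ord m).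
  set j : 'I_n := Ordinal jd.
  have jd' : (j < d)%N by rewrite /= -ltnS prednK.
  have := h j; rewrite lsh_mulE // jd' /=.
  have ej : inord j.+1 = m by apply: val_inj; rewrite /= prednK // inordK.
  rewrite ej => /(_ _)/eqP; rewrite mulf_eq0 -ej (negbTE (lsh_nz hS jd')) orbF.
  by rewrite ej => /(_ _)/eqP; apply; rewrite -ltnS prednK.
rewrite lsh_mulE //; case: ifP => // hj.
by rewrite h ?mul0r // inordK.
Qed.


Lemma L2 (S : M) z k : rsh S -> high k (z *m S) <-> high k.+1 z.
Proof.
move=> hS; split => h m hm.
  have jd : (m.+1 < n)%N by rewrite ltnS; apply: leq_trans hm; rewrite -addSnnS leq_addr.
  set j : 'I_n := Ordinal jd.
  have := h j; rewrite rsh_mulE //=.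
  have ej : inord m = m by apply: val_inj; rewrite /= inordK.
  rewrite ej => /(_ _)/eqP; rewrite mulf_eq0.
  have nz := rsh_nz hS (j := j) isT; rewrite /= ej in nz.
  by rewrite (negbTE nz) orbF => /(_ _)/eqP; apply; rewrite addSnnS.
rewrite rsh_mulE //; case: ifP => // hj.
rewrite h ?mul0r // inordK ?addSn ?prednK //.
- by rewrite addnS -addSn prednK.
- exact: ltnW.
Qed.

Lemma L3 (S : M) z k : lsh S -> high k z -> high k.+1 (z *m S).
Proof.
move=> hS h j hj; rewrite lsh_mulE //; case: ifP => // jd.
rewrite h ?mul0r // inordK; [by rewrite addSnnS | exact: jd].
Qed.

Lemma L4 (S : M) z k : rsh S -> low k z -> low k.+1 (z *m S).
Proof.
move=> hS h j hj; rewrite rsh_mulE //; case: ifP => // j0.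
rewrite h ?mul0r // inordK.
  by rewrite -ltnS prednK.
exact: leq_ltn_trans (leq_pred _) (ltn_ord j).
Qed.

Definition lowP (P : M) k (y : 'rV[F]_n) := low k (y *m invmx P).
Definition highP (P : M) k (y : 'rV[F]_n) := high k (y *m invmx P).

Lemma coordM (P X : M) (y : 'rV_n) : P \in unitmx ->
  (y *m X) *m invmx P = (y *m invmx P) *m cf P X.
Proof. by move=> u; rewrite /cf !mulmxA mulmxKV. Qed.

Lemma low0 (z : 'rV[F]_n) : low 0 z <-> z = 0.
Proof.
split => [h | -> m _]; last by rewrite mxE.
by apply/rowP => m; rewrite mxE h.
Qed.

Lemma high0 (z : 'rV[F]_n) : high 0 z <-> z = 0.
Proof.
split => [h | -> m _]; last by rewrite mxE.
apply/rowP => m; rewrite mxE h //; rewrite addn0 -ltnS; exact: ltn_ord.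
Qed.

Lemma coord0 (P : M) (y : 'rV_n) : P \in unitmx -> (y *m invmx P = 0) <-> y = 0.
Proof.
move=> u; split => [h | ->]; last by rewrite mul0mx.
by rewrite -(mulmxKV u y) h mul0mx.
Qed.

Lemma FL (P Q X : M) : P \in unitmx -> Q \in unitmx ->
  lsh (cf P X) -> rsh (cf Q X) -> forall k y, lowP P k y <-> highP Q k y.
Proof.
move=> uP uQ hP hQ k; elim: k => [|k IH] y.
  by rewrite /lowP /highP low0 high0 !coord0.
rewrite /lowP /highP -(L1 _ _ hP) -(L2 _ _ hQ) -!coordM //.
exact: IH.
Qed.


Lemma delta_low (i : 'I_n) : low i.+1 (delta_mx 0 i).
Proof. move=> m hm; rewrite mxE /=; case: eqP => // e; move: hm; rewrite -e ltnn. done. Qed.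

Lemma delta_high (i : 'I_n) : high (d - i).+1 (delta_mx 0 i).
Proof.
move=> m hm; rewrite mxE /=; case: eqP => // e; move: hm; rewrite -e.
have := ltn_ord i; lia.
Qed.

Lemma row_entry_cf (P X : M) (i j : 'I_n) :
  cf P X i j = (row i P *m X *m invmx P) 0 j.
Proof. by rewrite entry_row row_cf. Qed.


Definition diagM (S : M) := forall i j : 'I_n, i != j -> S i j = 0.

Lemma diag_lmul (D S : M) i j : diagM D -> (D *m S) i j = D i i * S i j.
Proof.
move=> hD; rewrite mxE (bigD1 i) //= big1 ?addr0 // => k /negbTE ki.
by rewrite hD ?mul0r // eq_sym ki.
Qed.

Lemma diag_rmul (D S : M) i j : diagM D -> (S *m D) i j = S i j * D j j.
Proof.
move=> hD; rewrite mxE (bigD1 j) //= big1 ?addr0 // => k /negbTE kj.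
by rewrite hD ?mulr0 // kj.
Qed.

Lemma edge (D S : M) i j : diagM D -> D *m S = S *m D -> S i j != 0 -> D i i = D j j.
Proof.
move=> hD e nz; have := congr1 (fun Z : M => Z i j) e => /=.
rewrite diag_lmul // diag_rmul // mulrC => /eqP; rewrite -subr_eq0 -mulrBr mulf_eq0.
by rewrite (negbTE nz) /= subr_eq0 => /eqP.
Qed.

Lemma diag_comm (D1 D2 : M) : diagM D1 -> diagM D2 -> D1 *m D2 = D2 *m D1.
Proof.
move=> h1 h2; apply/matrixP => i j; rewrite diag_lmul // diag_rmul //.
case: (eqVneq i j) => [->|ne]; first by rewrite mulrC.
by rewrite h2 // mulr0 mul0r.
Qed.

Lemma rsh_lmulE (T S : M) (i j : 'I_n) : rsh T ->
  (T *m S) i j = if (i < d)%N then T i (inord i.+1) * S (inord i.+1) j else 0.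
Proof.
move=> hT; rewrite mxE; case: ltnP => hi.
  rewrite (bigD1 (inord i.+1)) //= big1 ?addr0 // => m ne.
  have -> : T i m = 0.
    apply/eqP; rewrite -[_ == 0]negbK hT; apply/eqP => e; apply: (negP ne).
    by apply/eqP/ord_inj; rewrite inordK // e.
  by rewrite mul0r.
rewrite big1 // => m _.
have -> : T i m = 0.
  apply/eqP; rewrite -[_ == 0]negbK hT; apply/eqP => e.
  by have := ltn_ord m; rewrite -e; lia.
by rewrite mul0r.
Qed.

Lemma rsh_rmulE (T S : M) (i j : 'I_n) : rsh T ->
  (S *m T) i j = if (0 < j)%N then S i (inord j.-1) * T (inord j.-1) j else 0.
Proof.
move=> hT; rewrite mxE; case: ltnP => hj.
  rewrite (bigD1 (inord j.-1)) //= big1 ?addr0 // => m ne.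
  have -> : T m j = 0.
    apply/eqP; rewrite -[_ == 0]negbK hT; apply/eqP => e; apply: (negP ne).
    by apply/eqP/ord_inj; rewrite -e /= inordK ?ltn_ord.
  by rewrite mulr0.
rewrite big1 // => m _.
have -> : T m j = 0.
  apply/eqP; rewrite -[_ == 0]negbK hT; apply/eqP => e; lia.
by rewrite mulr0.
Qed.

Lemma lsh_rsh_diag (S T : M) : lsh S -> rsh T -> diagM (S *m T).
Proof.
move=> hS hT i j ne; rewrite mxE big1 // => k _.
case: (eqVneq (S i k) 0) => [->|nz]; first by rewrite mul0r.
case: (eqVneq (T k j) 0) => [->|nz']; first by rewrite mulr0.
move: nz nz'; rewrite hS hT => /eqP e1 /eqP e2; case/eqP: ne; apply: ord_inj; lia.
Qed.

Lemma rsh_lsh_diag (T S : M) : rsh T -> lsh S -> diagM (T *m S).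
Proof.
move=> hT hS i j ne; rewrite mxE big1 // => k _.
case: (eqVneq (T i k) 0) => [->|nz]; first by rewrite mul0r.
case: (eqVneq (S k j) 0) => [->|nz']; first by rewrite mulr0.
move: nz nz'; rewrite hS hT => /eqP e1 /eqP e2; case/eqP: ne; apply: ord_inj; lia.
Qed.

Lemma par_const (f : nat -> F) : (forall i, (i.+2 <= d)%N -> f i = f i.+2) ->
  forall i, (i <= d)%N -> f i = f (odd i).
Proof.
move=> h i; suff : ((i <= d)%N -> f i = f (odd i)) /\ ((i.+1 <= d)%N -> f i.+1 = f (odd i.+1)).
  by case.
elim: i => [|i [IH1 IH2]]; first by split => //; case: d.
split => // hi; rewrite /= negbK -IH1; last lia.
by rewrite (h i hi).
Qed.

Definition Dpar : M := \matrix_(i, j) ((i == j) && ~~ odd i)%:R.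

Lemma row_cf_shift (Q X : M) (i k : 'I_n) : Q \in unitmx ->
  (forall j, j != k -> cf Q X i j = 0) -> row i Q *m X = cf Q X i k *: row k Q.
Proof.
move=> u h; rewrite row_mul_cf //.
have -> : row i (cf Q X) = cf Q X i k *: (delta_mx 0 k : 'rV_n).
  apply/rowP => j; rewrite [LHS]mxE row_delta_entry.
  case: (eqVneq j k) => [->|ne]; first by rewrite mulr1.
  by rewrite h // mulr0.
by rewrite -scalemxAl -rowE.
Qed.

Lemma row_cf_zero (Q X : M) (i : 'I_n) : Q \in unitmx ->
  (forall j, cf Q X i j = 0) -> row i Q *m X = 0.
Proof.
move=> u h; rewrite row_mul_cf //; have -> : row i (cf Q X) = 0.
  by apply/rowP => j; rewrite [LHS]mxE h mxE.
by rewrite mul0mx.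
Qed.

Definition pc (b : bool) (z : 'rV[F]_n) := forall m : 'I_n, odd m != b -> z 0 m = 0.
Definition pcP (P : M) b (y : 'rV[F]_n) := pc b (y *m invmx P).

Lemma pc_scale b c z : pc b z -> pc b (c *: z).
Proof. by move=> h m hm; rewrite mxE h // mulr0. Qed.

Definition Jm (P : M) := invmx P *m Dpar *m P.

Lemma pc_D b (z : 'rV[F]_n) : pc b z -> z *m Dpar = (~~ b)%:R *: z.
Proof.
move=> h; apply/rowP => m; rewrite mxE (bigD1 m) //= big1 ?addr0.
  rewrite !mxE eqxx /=; case: (eqVneq (odd m) b) => [<-|ne].
    by rewrite mulrC.
  by rewrite h // mul0r mulr0.
by move=> k /negbTE km; rewrite mxE km mulr0.
Qed.

Lemma J_row (P : M) (y : 'rV_n) b : P \in unitmx -> pcP P b y ->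
  y *m Jm P = (~~ b)%:R *: y.
Proof.
move=> u h; rewrite /Jm !mulmxA (pc_D h).
by rewrite -scalemxAl mulmxKV.
Qed.

Lemma diag_rows (Q X : M) : Q \in unitmx ->
  (forall i, exists c, row i Q *m X = c *: row i Q) -> diagM (cf Q X).
Proof.
move=> u h i j ne; rewrite row_entry_cf; have [c ->] := h i.
by rewrite -scalemxAl rowP_inv // row_delta_entry (negbTE ne) mulr0.
Qed.

Lemma tr_delta (S : M) (i : 'I_n) : \tr (S *m delta_mx i i) = S i i.
Proof.
rewrite -(mul_delta_mx (0 : 'I_1)) mulmxA mxtrace_mulC mulmxA -rowE -colE.
by rewrite /mxtrace big_ord1 !mxE.
Qed.

Lemma uncf (P X : M) : P \in unitmx -> X = invmx P *m cf P X *m P.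
Proof. by move=> u; rewrite /cf !mulmxA mulmxKV // mulVmx // mul1mx. Qed.

Lemma cf_proj Vs i : decomposition Vs -> (i <= d)%N ->
  cf (frame Vs) (comp_proj Vs i) = delta_mx (inord i) (inord i).
Proof.
move=> dec hi; have u := frame_unit dec.
apply/row_matrixP => k; rewrite row_cf proj_frame // -scalemxAl rowP_inv //.
apply/rowP => j; rewrite row_delta_entry !mxE.
have e : (k == i :> nat) = (k == inord i) by rewrite -val_eqE /= inordK.
rewrite e; case: (eqVneq k (inord i)) => [->|ne] /=; last by rewrite mul0r.
by rewrite mul1r eq_sym.
Qed.

Lemma comm_diag (S : M) :
  (forall i : 'I_n, S *m delta_mx i i = delta_mx i i *m S) <-> diagM S.
Proof.
have l1 i k j : (S *m delta_mx i i) k j = S k i * (j == i)%:R.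
  rewrite mxE (bigD1 i) //= big1 ?addr0; first by rewrite mxE eqxx.
  by move=> l /negbTE li; rewrite mxE li mulr0.
have l2 i k j : (delta_mx i i *m S) k j = (k == i)%:R * S i j.
  rewrite mxE (bigD1 i) //= big1 ?addr0; first by rewrite mxE eqxx andbT.
  by move=> l /negbTE li; rewrite mxE eq_sym li andbF mul0r.
split => [h k j ne | h i].
  have := congr1 (fun Z : M => Z k j) (h j); rewrite /= l1 l2 eqxx (negbTE ne).
  by rewrite mulr1 mul0r.
apply/matrixP => k j; rewrite l1 l2.
case: (eqVneq j i) => [->|nji]; case: (eqVneq k i) => [->|nki] //=.
- by rewrite mulr1 mul1r.
- by rewrite h // mulr1 mul0r.
- by rewrite (h i j) ?mulr0 ?mul1r // eq_sym.
- by rewrite mulr0 mul0r.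
Qed.

Lemma cent_iff Vs X : decomposition Vs ->
  (forall i, (i <= d)%N -> X *m comp_proj Vs i = comp_proj Vs i *m X) <->
  diagM (cf (frame Vs) X).
Proof.
move=> dec; have u := frame_unit dec; rewrite -comm_diag; split => h i.
  have := congr1 (cf (frame Vs)) (h i (leq_ord i)); rewrite !cfM // cf_proj ?leq_ord //.
  by rewrite inord_val.
move=> hi; apply: (cf_inj u); rewrite !cfM // cf_proj //.
Qed.

Lemma tr_cf Vs Y i : decomposition Vs -> (i <= d)%N ->
  \tr (Y *m comp_proj Vs i) = cf (frame Vs) Y (inord i) (inord i).
Proof.
move=> dec hi; have u := frame_unit dec.
by rewrite -(cf_tr _ u) cfM // cf_proj // tr_delta.
Qed.

Lemma Dpar_sum :
  \sum_(j < (d./2).+1) delta_mx (inord (2 * j)) (inord (2 * j)) = Dpar.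
Proof.
apply/matrixP => a b; rewrite summxE [RHS]mxE.
case: (boolP ((a == b) && ~~ odd a)) => [/andP[/eqP eab oa] | h].
  rewrite -eab; have ha : (a : nat) = (a./2).*2 by rewrite halfK (negbTE oa) subn0.
  have a2 : (a./2 < (d./2).+1)%N.
    by rewrite ltnS half_leq // -ltnS.
  rewrite (bigD1 (Ordinal a2)) //= big1 ?addr0.
    rewrite mxE; have -> : inord (2 * a./2) = a.
      by apply: ord_inj; rewrite inordK mul2n -ha.
    by rewrite eqxx.
  move=> j ne; rewrite mxE; case: (eqVneq a (inord (2 * j))) => [ea|] //=.
  exfalso; move: ne; rewrite -val_eqE /=; apply/negP; rewrite negbK.
  move: ea => /(congr1 (@nat_of_ord _)); rewrite inordK; last first.
    have h2 := halfK d; rewrite -muln2 in h2; have := ltn_ord j; lia.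
  by move=> E; apply/eqP; rewrite E mul2n doubleK.
rewrite big1 // => j _; rewrite mxE.
case: (eqVneq a (inord (2 * j))) => [ea|] //=; case: (eqVneq b (inord (2 * j))) => [eb|] //=.
exfalso; move: h; rewrite ea eb eqxx /= inordK ?odd_mul //.
all: have h2 := halfK d; rewrite -muln2 in h2; have := ltn_ord j; lia.
Qed.

Lemma J_eq Vs : decomposition Vs ->
  \sum_(j < (d./2).+1) comp_proj Vs (2 * j) = Jm (frame Vs).
Proof.
move=> dec; have u := frame_unit dec.
rewrite (eq_bigr (fun j : 'I_(d./2).+1 => invmx (frame Vs) *m
    delta_mx (inord (2 * j)) (inord (2 * j)) *m frame Vs)) => [|j _].
  by rewrite -mulmx_suml -mulmx_sumr Dpar_sum.
rewrite {1}(@uncf (frame Vs) (comp_proj Vs (2 * j)) u) cf_proj //.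
have h2 := halfK d; rewrite -muln2 in h2; have := ltn_ord j; lia.
Qed.

Lemma cf_Jm (P : M) : P \in unitmx -> cf P (Jm P) = Dpar.
Proof. by move=> u; rewrite /cf /Jm !mulmxA mulmxV // mul1mx mulmxK. Qed.

Lemma diag_Dpar : diagM Dpar.
Proof. by move=> i j ne; rewrite mxE (negbTE ne). Qed.

Lemma diag_scalar (c : F) : diagM c%:M.
Proof. by move=> i j ne; rewrite mxE (negbTE ne). Qed.

Lemma diagD (S T : M) : diagM S -> diagM T -> diagM (S + T).
Proof. by move=> h1 h2 i j ne; rewrite mxE h1 // h2 // addr0. Qed.

Lemma diagZ (c : F) (S : M) : diagM S -> diagM (c *: S).
Proof. by move=> h i j ne; rewrite mxE h // mulr0. Qed.

Section Triple.
Variables (A B C P P' P'' : M).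
Hypotheses (uP : P \in unitmx) (uP' : P' \in unitmx) (uP'' : P'' \in unitmx).
Hypotheses (hA : lsh (cf P A)) (hB : rsh (cf P B)) (hB' : lsh (cf P' B))
  (hC' : rsh (cf P' C)) (hC'' : lsh (cf P'' C)) (hA'' : rsh (cf P'' A)).

Lemma T1 k y : lowP P k y -> lowP P k.+1 (y *m C).
Proof.
move/(FL uP uP'' hA hA'') => h; apply/(FL uP uP'' hA hA'').
by rewrite /highP coordM //; apply: L3.
Qed.

Lemma T2 k y : highP P k y -> highP P k.+1 (y *m C).
Proof.
move/(FL uP' uP hB' hB) => h; apply/(FL uP' uP hB' hB).
by rewrite /lowP coordM //; apply: L4.
Qed.

Lemma Ch_up (i j : 'I_n) : (i.+2 <= j)%N -> cf P C i j = 0.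
Proof.
move=> hij; rewrite row_entry_cf; apply: (T1 (k := i.+1)) => //.
by rewrite /lowP rowP_inv //; apply: delta_low.
Qed.

Lemma Ch_down (i j : 'I_n) : (j.+2 <= i)%N -> cf P C i j = 0.
Proof.
move=> hij; rewrite row_entry_cf; apply: (T2 (k := (d - i).+1)).
  by rewrite /highP rowP_inv //; apply: delta_high.
have := ltn_ord i; lia.
Qed.

Lemma T3 (k : 'I_n) : (k < d)%N -> cf P C k (inord k.+1) != 0.
Proof.
move=> kd; apply/negP => /eqP z0.
have pres y : lowP P k.+1 y -> lowP P k.+1 (y *m C).
  move=> h m hm; rewrite /lowP coordM // mxE big1 // => j _.
  case: (leqP k.+1 j) => hj; first by rewrite h ?mul0r.
  case: (leqP j.+2 m) => hjm; first by rewrite Ch_up ?mulr0.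
  have ej : j = k by apply: ord_inj; lia.
  have em : m = inord k.+1 by apply: ord_inj; rewrite inordK; lia.
  by rewrite ej em z0 mulr0.
set y := row (inord (d - k)) P''.
have hy : highP P'' k.+1 y.
  rewrite /highP rowP_inv // => m hm; rewrite mxE eqxx /=.
  case: eqP => // e; move: hm; rewrite e inordK; lia.
have := pres y (proj2 (FL uP uP'' hA hA'' _ _) hy).
move/(FL uP uP'' hA hA'') => /(_ (inord (d - k).-1)).
have jd : ((inord (d - k).-1 : 'I_n) < d)%N by rewrite inordK; lia.
have nz := lsh_nz hC'' jd.
have e : inord (inord (d - k).-1 : 'I_n).+1 = inord (d - k) :> 'I_n.
  by apply: ord_inj; rewrite !inordK; lia.
rewrite e row_entry_cf -/y in nz.
move=> h; move/negP: nz; apply; apply/eqP; apply: h.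
rewrite inordK; lia.
Qed.

Section Cent.
Variable X : M.
Hypotheses (hX : diagM (cf P X)) (hX' : diagM (cf P' X)).

Lemma XBC : cf P X *m (cf P B *m cf P C) = (cf P B *m cf P C) *m cf P X.
Proof.
have e : X *m (B *m C) = (B *m C) *m X.
  apply: (cf_inj uP'); rewrite !cfM //; apply: diag_comm => //.
  exact: lsh_rsh_diag.
by rewrite -!cfM // e.
Qed.

Lemma XCB : cf P X *m (cf P C *m cf P B) = (cf P C *m cf P B) *m cf P X.
Proof.
have e : X *m (C *m B) = (C *m B) *m X.
  apply: (cf_inj uP'); rewrite !cfM //; apply: diag_comm => //.
  exact: rsh_lsh_diag.
by rewrite -!cfM // e.
Qed.

Let f (i : nat) := cf P X (inord i) (inord i).

Lemma step2 i : (i.+2 <= d)%N -> f i = f i.+2.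
Proof.
move=> hi; rewrite /f.
apply: (edge hX XBC); rewrite rsh_lmulE // inordK; last lia.
rewrite ifT; last lia.
rewrite mulf_eq0 negb_or hB inordK; last lia.
have k1 : ((inord i.+1 : 'I_n) < d)%N by rewrite inordK; lia.
have := T3 k1; rewrite inordK; last lia.
by move=> ->; rewrite andbT.
Qed.

Lemma adj (j : 'I_n) : (0 < d)%N -> cf P C j j != 0 -> exists i, (i < d)%N /\ f i = f i.+1.
Proof.
move=> d0 nz; case: (ltnP j d) => jd.
  exists j; split => //; rewrite /f.
  apply: (edge hX XCB); rewrite rsh_rmulE // inordK; last lia.
  rewrite ltn0Sn /= inord_val mulf_eq0 negb_or nz hB inordK //=.
have ej : (j : nat) = d by apply/eqP; rewrite eqn_leq jd -ltnS ltn_ord.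
exists d.-1; split; first lia.
rewrite /f; apply: (edge hX XBC); rewrite rsh_lmulE // inordK; last lia.
rewrite ifT; last lia.
have ej' : inord d.-1.+1 = j :> 'I_n by apply: ord_inj; rewrite inordK; lia.
rewrite ej' mulf_eq0 negb_or nz hB inordK; last lia.
by rewrite andbT ej; apply/eqP; lia.
Qed.

Lemma GL_scalar : (0 < d)%N -> (exists j : 'I_n, cf P C j j != 0) -> X = (f 0)%:M.
Proof.
move=> d0 [j nz]; have [i [id e]] := adj d0 nz.
have pc := par_const step2.
have f01 : f 0 = f 1.
  have := e; rewrite (pc i) ?(ltnW id) // (pc i.+1) //=.
  by case: (odd i) => /= ->.
have fa a : (a <= d)%N -> f a = f 0 by move/pc ->; case: (odd a).
apply: (cf_inj uP); rewrite cf_scalar //; apply/matrixP => a b; rewrite [RHS]mxE.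
case: (eqVneq a b) => [<-|ne]; last by rewrite mulr0n; apply: hX.
rewrite mulr1n -(fa a) /f ?inord_val // -ltnS; exact: (ltn_ord a).
Qed.

Lemma GL_bip : (0 < d)%N -> cf P X = (f 1)%:M + (f 0 - f 1) *: Dpar.
Proof.
move=> d0; have pc := par_const step2.
apply/matrixP => a b; rewrite [RHS]mxE [in RHS]mxE [in RHS]mxE /Dpar [in RHS]mxE.
case: (eqVneq a b) => [<-|ne] /=; last by rewrite mulr0n mulr0 addr0; apply: hX.
have := pc a; rewrite /f inord_val => ->; last by rewrite -ltnS.
by case: (odd a) => /=; rewrite ?mulr0 ?mulr1 ?addr0 // addrC subrK.
Qed.

End Cent.

Lemma neq_negb (x y : bool) : x != ~~ y -> x = y. Proof. by case: x; case: y. Qed.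
Lemma nbx (x : bool) : ~~ x <> x. Proof. by case: x. Qed.

Section Bip.
Hypothesis hdiag : forall j, cf P C j j = 0.

Lemma swapC b z : pc b z -> pc (~~ b) (z *m cf P C).
Proof.
move=> h m hm; rewrite mxE big1 // => j _.
case: (eqVneq (odd j) b) => hj; last by rewrite h // mul0r.
have om : odd m = b by apply: neq_negb.
suff -> : cf P C j m = 0 by rewrite mulr0.
case: (ltngtP j m) => hjm.
- case: (leqP j.+2 m) => h2; first exact: Ch_up.
  have e : (m : nat) = j.+1 by lia.
  by move: om; rewrite e /= hj => /nbx [].

- case: (leqP m.+2 j) => h2; first exact: Ch_down.
  have e : (j : nat) = m.+1 by lia.
  by move: hj; rewrite e /= om => /nbx [].
- by have -> : j = m by apply: ord_inj.
Qed.

Lemma pcP_C b y : pcP P b y -> pcP P (~~ b) (y *m C).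
Proof. by rewrite /pcP coordM //; apply: swapC. Qed.

Lemma w_par j : (j <= d)%N -> pcP P (odd (d + j)) (row (inord j) P').
Proof.
elim: j => [_|j IH hj].
  have z : row (inord 0) P' *m B = 0.
    apply: row_cf_zero => // k; apply/eqP; rewrite -[_ == 0]negbK hB' inordK //.
  have : high 1 (row (inord 0) P' *m invmx P).
    by apply/(L2 _ _ hB); rewrite -coordM // z mul0mx => m _; rewrite mxE.
  move=> hh m hm; apply: hh; rewrite addn0 in hm.
  have : (m : nat) != d by apply: contraNneq hm => ->.
  have := ltn_ord m; lia.
have jd : ((inord j : 'I_n) < d)%N by rewrite inordK; lia.
have := row_cf_shift (i := inord j) (k := inord j.+1) uP' _.
have e : inord (inord j : 'I_n).+1 = inord j.+1 :> 'I_n by apply: ord_inj; rewrite !inordK; lia.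
have nz := hC' (inord j) (inord j.+1); rewrite !inordK ?eqxx in nz; try lia.
move=> /(_ _) hr.
have {}hr : row (inord j) P' *m C = cf P' C (inord j) (inord j.+1) *: row (inord j.+1) P'.
  apply: hr => k ne; apply/eqP; rewrite -[_ == 0]negbK hC'; apply: contra ne => /eqP ek.
  by apply/eqP/ord_inj; rewrite -ek !inordK; lia.
have -> : row (inord j.+1) P' = (cf P' C (inord j) (inord j.+1))^-1 *: (row (inord j) P' *m C).
  by rewrite hr scalerA mulVf ?scale1r.
rewrite /pcP -scalemxAl; apply: pc_scale.
rewrite addnS /=; apply: pcP_C; apply: IH; lia.
Qed.

Lemma u_par t : (t <= d)%N -> pcP P (odd t) (row (inord (d - t)) P'').
Proof.
elim: t => [_|t IH ht].
  have z : row (inord (d - 0)) P'' *m A = 0.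
    apply: row_cf_zero => // k; apply/eqP; rewrite -[_ == 0]negbK hA'' inordK; last lia.
    by apply/negP => /eqP ek; have := ltn_ord k; lia.
  have : low 1 (row (inord (d - 0)) P'' *m invmx P).
    by apply/(L1 _ _ hA); rewrite -coordM // z mul0mx => m _; rewrite mxE.
  move=> hh m hm; apply: hh.
  by case: (posnP m) => // m0; move: hm; rewrite m0.
have nz := hC'' (inord (d - t)) (inord (d - t).-1); rewrite !inordK ?eqxx in nz; try lia.
have {}nz : cf P'' C (inord (d - t)) (inord (d - t).-1) != 0.
  by rewrite nz; apply/eqP; lia.
have hr : row (inord (d - t)) P'' *m C = cf P'' C (inord (d - t)) (inord (d - t).-1) *: row (inord (d - t).-1) P''.
  apply: row_cf_shift => // k ne; apply/eqP; rewrite -[_ == 0]negbK hC''; apply: contra ne => /eqP ek.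
  apply/eqP/ord_inj; move: ek; rewrite !inordK; lia.
have e : inord (d - t.+1) = inord (d - t).-1 :> 'I_n by apply: ord_inj; rewrite !inordK; lia.
rewrite e.
have -> : row (inord (d - t).-1) P'' = (cf P'' C (inord (d - t)) (inord (d - t).-1))^-1 *: (row (inord (d - t)) P'' *m C).
  by rewrite hr scalerA mulVf ?scale1r.
rewrite /pcP -scalemxAl; apply: pc_scale.
rewrite /=; apply: pcP_C; apply: IH; lia.
Qed.

End Bip.

End Triple.

End Frame.

Unset Implicit Arguments.
Set Strict Implicit.

Lemma mx_d0 (F : fieldType) d (X : 'M[F]_d.+1) : d = 0%N -> X = (X ord0 ord0)%:M.
Proof. by move=> d0; subst; exact: mx11_scalar. Qed.

Theorem proposition19p5 (F : fieldType) (d : nat) (A B C : 'M[F]_(d.+1))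
  (Vs Vs' Vs'' : nat -> 'M[F]_(d.+1)) :
  LR_triple A B C ->
  XY_decomposition A B Vs -> XY_decomposition B C Vs' -> XY_decomposition C A Vs'' ->
  let E := comp_proj Vs in
  let E' := comp_proj Vs' in
  let E'' := comp_proj Vs'' in
  let bipartite :=
    forall i, (i <= d)%N ->
      [/\ \tr (C *m E i) = 0, \tr (A *m E' i) = 0 & \tr (B *m E'' i) = 0] in
  let idem_centralizer (X : 'M[F]_(d.+1)) :=
    forall i, (i <= d)%N ->
      [/\ X *m E i = E i *m X, X *m E' i = E' i *m X & X *m E'' i = E'' i *m X] in
  let J := \sum_(j < (d./2).+1) E (2 * j)%N in
  (d = 0%N ->
     (forall X, idem_centralizer X <-> exists c : F, X = c%:M) /\
     (forall c : F, c%:M = 0 :> 'M[F]_(d.+1) -> c = 0)) /\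
  (~ bipartite ->
     (forall X, idem_centralizer X <-> exists c : F, X = c%:M) /\
     (forall c : F, c%:M = 0 :> 'M[F]_(d.+1) -> c = 0)) /\
  (bipartite -> (0 < d)%N ->
     (forall X, idem_centralizer X <-> exists a b : F, X = a%:M + b *: J) /\
     (forall a b : F, a%:M + b *: J = 0 -> a = 0 /\ b = 0)).
Proof.
move=> _ [decV [lowA raiseB]] [decV' [lowB raiseC]] [decV'' [lowC raiseA]].
move=> E E' E'' bip idc J.
set P := frame Vs; set P' := frame Vs'; set P'' := frame Vs''.
have uP : P \in unitmx := frame_unit decV.
have uP' : P' \in unitmx := frame_unit decV'.
have uP'' : P'' \in unitmx := frame_unit decV''.
have hA : lsh (cf P A) := lowers_lsh decV lowA.
have hB : rsh (cf P B) := raises_rsh decV raiseB.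
have hB' : lsh (cf P' B) := lowers_lsh decV' lowB.
have hC' : rsh (cf P' C) := raises_rsh decV' raiseC.
have hC'' : lsh (cf P'' C) := lowers_lsh decV'' lowC.
have hA'' : rsh (cf P'' A) := raises_rsh decV'' raiseA.
have cent X : idc X <-> [/\ diagM (cf P X), diagM (cf P' X) & diagM (cf P'' X)].
  split => [h | [h1 h2 h3] i hi].
    split; [apply/(cent_iff X decV) | apply/(cent_iff X decV') | apply/(cent_iff X decV'')];
      by move=> i hi; case: (h i hi).
  split; [exact: (proj2 (cent_iff X decV)) h1 i hi
         | exact: (proj2 (cent_iff X decV')) h2 i hi
         | exact: (proj2 (cent_iff X decV'')) h3 i hi].
have sc0 (c : F) : c%:M = 0 :> 'M[F]_(d.+1) -> c = 0.
  by move/(congr1 (fun Z : 'M[F]_(d.+1) => Z ord0 ord0)); rewrite !mxE eqxx mulr1n.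
have scal_cent (c : F) : idc c%:M.
  by move=> i hi; split; rewrite scalar_mxC.
split.
  move=> d0; split => // X; split => [_ | [c ->] //].
  by exists (X ord0 ord0); apply: mx_d0.
split.
  move=> nbip; split => // X; split => [/cent [h1 h2 h3] | [c ->] //].
  case: (posnP d) => [d0 | dpos]; first by exists (X ord0 ord0); apply: mx_d0.
  case: (boolP [exists i : 'I_(d.+1), [|| \tr (C *m E i) != 0, \tr (A *m E' i) != 0
       | \tr (B *m E'' i) != 0]]) => [/existsP [i hi] | /existsPn hn]; last first.
    exfalso; apply: nbip => i hi.
    have := hn (Ordinal (hi : (i < d.+1)%N)); rewrite !negb_or !negbK.
    by case/and3P => /eqP -> /eqP -> /eqP ->.
  case/or3P: hi => hi.
  - rewrite /E tr_cf // in hi; last exact: leq_ord.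
    eexists; apply: (GL_scalar (A:=A) (B:=B) (C:=C) (P:=P) (P':=P') (P'':=P'')) => //.
    by exists (inord i).
  - rewrite /E' tr_cf // in hi; last exact: leq_ord.
    eexists; apply: (GL_scalar (A:=B) (B:=C) (C:=A) (P:=P') (P':=P'') (P'':=P)) => //.
    by exists (inord i).
  - rewrite /E'' tr_cf // in hi; last exact: leq_ord.
    eexists; apply: (GL_scalar (A:=C) (B:=A) (C:=B) (P:=P'') (P':=P) (P'':=P')) => //.
    by exists (inord i).
move=> hbip dpos.
have hdiag : forall j : 'I_(d.+1), cf P C j j = 0.
  move=> j; have := hbip j (leq_ord j); case => + _ _.
  by rewrite /E tr_cf ?leq_ord // inord_val.
have Jeq : J = Jm P by apply: J_eq.
have JP : diagM (cf P (Jm P)) by rewrite cf_Jm //; apply: diag_Dpar.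
have JP' : diagM (cf P' (Jm P)).
  apply: diag_rows => // i; eexists; apply: J_row => //.
  have := w_par uP uP' uP'' hA hB hB' hC' hC'' hA'' hdiag (leq_ord i).
  by rewrite inord_val => h; exact: h.
have JP'' : diagM (cf P'' (Jm P)).
  apply: diag_rows => // i; eexists; apply: J_row => //.
  have hi : (d - i <= d)%N by lia.
  have := u_par uP uP' uP'' hA hB hB' hC' hC'' hA'' hdiag hi.
  have -> : inord (d - (d - i)) = i :> 'I_(d.+1).
    by apply: ord_inj; rewrite inordK; have := ltn_ord i; lia.
  by move=> h; exact: h.
split.
  move=> X; split => [/cent [h1 h2 h3] | [a [b ->]]].
    eexists; eexists; rewrite Jeq; apply: (cf_inj uP).
    rewrite cfD cfZ cf_scalar // cf_Jm //.
    exact: (GL_bip uP uP' uP'' hA hB hB' hC' hC'' hA'' h1 h2 dpos).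
  apply/cent; rewrite Jeq; split; rewrite cfD cfZ ?cf_scalar //;
    apply: diagD; rewrite ?cf_scalar //; try apply: diag_scalar; apply: diagZ => //.
move=> a b; rewrite Jeq => /(congr1 (cf P)); rewrite cfD cfZ cf_scalar // cf_Jm //.
have e1 := fun (i : 'I_(d.+1)) (e : a%:M + b *: Dpar F d = 0) => congr1 (fun Z : 'M[F]_(d.+1) => Z i i) e.
rewrite /= in e1.
move=> e0; have e : a%:M + b *: Dpar F d = 0 by rewrite e0 /cf mulmx0 mul0mx.
have h1 := e1 (inord 1) e; have h0 := e1 ord0 e.
rewrite !mxE !eqxx !mulr1n /= inordK ?ltnS // mulr0 addr0 in h1.
rewrite !mxE !eqxx !mulr1n /= mulr1 in h0.
by split => //; move: h0; rewrite h1 add0r.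
Qed.
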